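(* Let $\mathcal{C}$, $\mathcal{X}$, $\mathcal{I}$ be three similar configurations of $d$ doors, where $\mathcal{X}$ is cascading and $\mathcal{I}$ is independent. Then for every knock sequence $\pi$, $$\mathbb{T}_{\mathcal{I}}(\pi)\le \mathbb{T}_{\mathcal{C}}(\pi)\le \mathbb{T}_{\mathcal{X}}(\pi),$$ and consequently $\mathbb{T}_{\mathcal{I}}\le \mathbb{T}_{\mathcal{C}}\le \mathbb{T}_{\mathcal{X}}$.
   Context: Dependent doors model. Fix an integer $d\ge 2$ and doors $1,\dots,d$, all initially closed; once a door opens it stays open forever. A configuration $\mathcal{C}$ specifies for each door $i$ a function $\phi_i^{\mathcal{C}}$ mapping every finite nonempty sequence $(X_1,\dots,X_n)$ of subsets of $\{1,\dots,i-1\}$ to $[0,1]$: $\phi_i^{\mathcal{C}}(X_1,\dots,X_n)$ is the probability that door $i$ has opened during $n$ knocks on it, where $X_j$ is the set of open doors among $\{1,\dots,i-1\}$ at the time of the $j$-th knock on door $i$ (so a closed door $i$ opens at its $n$-th knock with conditional probability $(\phi_i(X_1..X_n)-\phi_i(X_1..X_{n-1}))/(1-\phi_i(X_1..X_{n-1}))$, with $\phi_i$ of the empty sequence equal to $0$). Configurations are assumed monotone ($\phi_i(X')\le\phi_i(X)$ whenever $X'$ is a, not necessarily consecutive, subsequence of $X$) and positively correlated ($\phi_i(X'_1,\dots,X'_n)\le\phi_i(X_1,\dots,X_n)$ whenever $X'_j\subseteq X_j$ for all $j$). The fundamental distribution of door $i$ is $p_i(n)=1-\phi_i(\{1,\dots,i-1\}^n)$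 ($p_i(0)=1$), and $E_i=\sum_{n\ge0}p_i(n)$ is assumed finite. Two configurations are similar if for every $i$ door $i$ has the same fundamental distribution in both. A configuration is independent if $\phi_i(X_1,\dots,X_k)=\phi_i(\{1,\dots,i-1\}^k)$ for all inputs, and cascading if $\phi_i(X_1,\dots,X_k)=\phi_i(\{1,\dots,i-1\}^t)$ where $t$ is the number of $j$ with $X_j=\{1,\dots,i-1\}$. A knock sequence $\pi$ is an infinite sequence of door indices, executed in order without any feedback; $\mathbb{T}_{\mathcal{C}}(\pi)$ is the expected number of knocks until all $d$ doors are open, and $\mathbb{T}_{\mathcal{C}}=\inf_\pi \mathbb{T}_{\mathcal{C}}(\pi)$. *)

(* Defs.v *)
From HB Require Import structures.
From mathcomp Require Import all_boot all_order all_algebra.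
From mathcomp Require Import boolp classical_sets reals ereal sequences.
Set Implicit Arguments. Unset Strict Implicit. Unset Printing Implicit Defensive.
Import Order.TTheory GRing.Theory Num.Theory.
Local Open Scope ring_scope.

(* Doors 1..d are represented by 'I_d (door i <-> ordinal i-1), so the doors
   with smaller index than door i are [set j | j < i]. *)
Definition lower (d : nat) (i : 'I_d) : {set 'I_d} := [set j : 'I_d | (j < i)%N].

(* A configuration: phi i (X_1..X_n) for door i.  Only sequences of subsets of
   [lower i] are meaningful inputs; phi i [::] is the probability after 0 knocks. *)
Definition config (R : realType) (d : nat) := 'I_d -> seq {set 'I_d} -> R.

Definition valid_input d (i : 'I_d) (s : seq {set 'I_d}) : bool :=
  all (fun X : {set 'I_d} => X \subset lower i) s.

Definition fullseq d (i : 'I_d) (n : nat) : seq {set 'I_d} := nseq n (lower i).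

Section Config.
Variables (R : realType) (d : nat).
Implicit Types (C : config R d) (i : 'I_d).

Definition is_probability_config C : Prop :=
  forall i, C i [::] = 0 /\
    forall s, valid_input i s -> 0 <= C i s <= 1.

Definition monotone_config C : Prop :=
  forall i s s', valid_input i s -> subseq s' s -> C i s' <= C i s.

Definition poscorr_config C : Prop :=
  forall i s s', valid_input i s -> all2 (fun a b : {set 'I_d} => a \subset b) s' s ->
    C i s' <= C i s.

Definition fund C i (n : nat) : R := 1 - C i (fullseq i n).

Definition finite_expectations C : Prop :=
  forall i, (\sum_(0 <= n <oo) (fund C i n)%:E < +oo)%E.

Definition good_config C : Prop :=
  [/\ is_probability_config C, monotone_config C, poscorr_config C
    & finite_expectations C].

Definition similar_config C1 C2 : Prop := forall i n, fund C1 i n = fund C2 i n.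

Definition independent C : Prop :=
  forall i s, valid_input i s -> C i s = C i (fullseq i (size s)).

Definition cascading C : Prop :=
  forall i s, valid_input i s ->
    C i s = C i (fullseq i (count (fun X => X == lower i) s)).

(* An outcome over horizon t records for each door the (0-based) index u < t of
   the knock at which it opened, or None if it is still closed after t knocks. *)
Definition outcome (t : nat) := {ffun 'I_d -> option 'I_t}.

Definition opened_before t (o : outcome t) (j : 'I_d) (s : nat) : bool :=
  if o j is Some u then (u < s)%N else false.

Definition open_lower t (o : outcome t) i (s : nat) : {set 'I_d} :=
  [set j : 'I_d | (j < i)%N && opened_before o j s].

(* X-sequence seen by door i during the knocks with index < b *)
Definition Xseq (pi : nat -> 'I_d) t (o : outcome t) i (b : nat) : seq {set 'I_d} :=
  [seq open_lower o i s | s <- [seq s <- iota 0 b | pi s == i]].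

(* probability contribution of door i (chain rule, telescoped) *)
Definition door_weight C (pi : nat -> 'I_d) t (o : outcome t) i : R :=
  match o i with
  | Some u => if pi u == i then C i (Xseq pi o i u.+1) - C i (Xseq pi o i u)
              else 0
  | None => 1 - C i (Xseq pi o i t)
  end.

Definition outcome_prob C pi t (o : outcome t) : R :=
  \prod_(i : 'I_d) door_weight C pi o i.

Definition P_not_done C (pi : nat -> 'I_d) (t : nat) : R :=
  \sum_(o : outcome t | [exists i, o i == None]) outcome_prob C pi o.

(* expected number of knocks until all doors are open: E[tau] = sum_t P(tau > t) *)
Definition ET C (pi : nat -> 'I_d) : \bar R :=
  (\sum_(0 <= t <oo) (P_not_done C pi t)%:E)%E.

Definition Topt C : \bar R := ereal_inf (range (ET C)).

End Config.

(* Main.v *)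
Require Import Defs.
From HB Require Import structures.
From mathcomp Require Import all_boot all_order all_algebra.
From mathcomp Require Import boolp classical_sets reals ereal sequences.
From mathcomp Require Import ring lra.
Import Order.TTheory GRing.Theory Num.Theory.
Local Open Scope ring_scope.
Set Implicit Arguments. Unset Strict Implicit. Unset Printing Implicit Defensive.

Section Main.
Variables (R : realType) (d : nat) (pi : nat -> 'I_d) (t : nat).
Implicit Types (C : config R d) (o : outcome d t).

Definition upd o (i : 'I_d) (v : option 'I_t) : outcome d t :=
  [ffun j => if j == i then v else o j].

Definition inO (k : nat) o := [forall j : 'I_d, (k <= j)%N ==> (o j == None)].
Definition W C (k : nat) o := \prod_(i : 'I_d | (i < k)%N) door_weight C pi o i.
Definition Aev (k s : nat) o := [forall j : 'I_d, (j < k)%N ==> opened_before o j s].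
Definition D C (k s : nat) := \sum_(o : outcome d t | inO k o) W C k o * (Aev k s o)%:R.

Lemma open_lower_local o1 o2 (i : 'I_d) s :
  (forall j : 'I_d, (j < i)%N -> o1 j = o2 j) -> open_lower o1 i s = open_lower o2 i s.
Proof.
move=> E; apply/setP=> j; rewrite !inE; case h: (j < i)%N => //=.
by rewrite /opened_before E.
Qed.

Lemma Xseq_local o1 o2 (i : 'I_d) b :
  (forall j : 'I_d, (j < i)%N -> o1 j = o2 j) -> Xseq pi o1 i b = Xseq pi o2 i b.
Proof. by move=> E; rewrite /Xseq; apply: eq_map => s; apply: open_lower_local. Qed.

Lemma dw_local C o1 o2 (i : 'I_d) :
  (forall j : 'I_d, (j <= i)%N -> o1 j = o2 j) ->
  door_weight C pi o1 i = door_weight C pi o2 i.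
Proof.
move=> E; have E' : forall j : 'I_d, (j < i)%N -> o1 j = o2 j.
  by move=> j h; apply: E; apply: ltnW.
rewrite /door_weight (E i (leqnn i)); case: (o2 i) => [u|]; by rewrite !(Xseq_local _ E').
Qed.

Lemma upd_at o i v : upd o i v i = v.
Proof. by rewrite ffunE eqxx. Qed.

Lemma upd_ne o i v j : j != i -> upd o i v j = o j.
Proof. by rewrite ffunE => /negbTE ->. Qed.

Lemma Xseq_upd o (i : 'I_d) v b : Xseq pi (upd o i v) i b = Xseq pi o i b.
Proof.
apply: Xseq_local => j h; apply: upd_ne.
by rewrite neq_ltn h.
Qed.

Lemma sum_option (F : option 'I_t -> R) :
  \sum_v F v = F None + \sum_(u : 'I_t) F (Some u).
Proof.
rewrite (bigD1 None) //=; congr (_ + _).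
rewrite (reindex_omap Some id) /=; last by case => [a|].
by apply: eq_bigl => u; rewrite eqxx.
Qed.

Lemma sum_peel (kk : 'I_d) (F : outcome d t -> R) :
  \sum_(o | inO kk.+1 o) F o = \sum_(o | inO kk o) \sum_v F (upd o kk v).
Proof.
rewrite pair_big_dep /=.
rewrite (reindex_onto (fun p : outcome d t * option 'I_t => upd p.1 kk p.2)
   (fun o => (upd o kk None, o kk))) /=; last first.
  move=> o _; apply/ffunP => j; rewrite !ffunE.
  by case: eqP => // ->.
apply: eq_bigl => -[o v] /=.
rewrite xpair_eqE upd_at eqxx andbT [in RHS]andbT.
apply/idP/idP.
- case/andP=> /forallP h1 /eqP h2.
  apply/forallP => j; apply/implyP => hj.
  case: (eqVneq j kk) => [->|jk].
    by move/ffunP: h2 => /(_ kk); rewrite !ffunE eqxx => <-.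
  have := h1 j; rewrite upd_ne // => /implyP; apply.
  by rewrite ltn_neqAle eq_sym hj andbT; apply: contra jk => /eqP/val_inj ->.
- move/forallP=> h; apply/andP; split.
    apply/forallP=> j; apply/implyP => hj.
    have jk : j != kk by apply/eqP => E; move: hj; rewrite E ltnn.
    rewrite upd_ne //; have := h j => /implyP; apply; exact: ltnW.
  apply/eqP/ffunP => j; rewrite !ffunE.
  case: eqP => [->|//].
  by have := h kk => /implyP; rewrite leqnn => /(_ isT) /eqP.
Qed.

Lemma ltn_neq_ord (j kk : 'I_d) : (j < kk)%N -> j != kk.
Proof. by move=> h; apply/eqP => E; move: h; rewrite E ltnn. Qed.

Lemma W_peel C (kk : 'I_d) o v :
  W C kk.+1 (upd o kk v) = W C kk o * door_weight C pi (upd o kk v) kk.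
Proof.
rewrite /W (bigD1 kk) //= mulrC; congr (_ * _).
apply: eq_big => [i|i /andP[hi hne]].
  rewrite ltnS leq_eqVlt; have -> : ((i:nat) == kk) = (i == kk) by [].
  by case: eqVneq => [->|_]; rewrite ?ltnn //= andbT.
have hik : (i < kk)%N by rewrite ltn_neqAle -ltnS hi andbT.
apply: dw_local => j hj; apply: upd_ne.
exact: ltn_neq_ord (leq_ltn_trans hj hik).
Qed.

Lemma ob_upd_ne o (kk j : 'I_d) v s : j != kk ->
  opened_before (upd o kk v) j s = opened_before o j s.
Proof. by move=> h; rewrite /opened_before upd_ne. Qed.

Lemma ob_upd_at o (kk : 'I_d) v s :
  opened_before (upd o kk v) kk s = (if v is Some u then (u < s)%N else false).
Proof. by rewrite /opened_before upd_at. Qed.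

Lemma Aev_peel (kk : 'I_d) s o v :
  Aev kk.+1 s (upd o kk v) = Aev kk s o && opened_before (upd o kk v) kk s.
Proof.
apply/idP/andP.
- move/forallP => h; split.
    apply/forallP => j; apply/implyP => hj.
    have jk : j != kk by exact: ltn_neq_ord.
    have := h j; rewrite ob_upd_ne // => /implyP; apply; exact: ltnW.
  by have := h kk; rewrite ltnSn => /implyP; apply.
- case=> /forallP h1 h2; apply/forallP => j; apply/implyP.
  rewrite ltnS leq_eqVlt; case/orP => [/eqP/val_inj -> //|hj].
  have jk : j != kk by exact: ltn_neq_ord.
  rewrite ob_upd_ne //; exact: (implyP (h1 j) hj).
Qed.

Lemma Xseq_S o (i : 'I_d) k :
  Xseq pi o i k.+1 = Xseq pi o i k ++ (if pi k == i then [:: open_lower o i k] else [::]).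
Proof.
rewrite /Xseq -addn1 iotaD filter_cat map_cat add0n /=.
by case: (pi k == i).
Qed.

Lemma inner_ob C (kk : 'I_d) o s : C kk [::] = 0 -> (s <= t)%N ->
  \sum_v door_weight C pi (upd o kk v) kk * (opened_before (upd o kk v) kk s)%:R
  = C kk (Xseq pi o kk s).
Proof.
move=> C0 hs.
set g := fun k => C kk (Xseq pi o kk k).
have gstep : forall u, (if pi u == kk then g u.+1 - g u else 0) = g u.+1 - g u.
  by move=> u; case h: (pi u == kk) => //; rewrite /g Xseq_S h cats0 subrr.
have E := @telescope_sumr _ 0 s g (leq0n s).
rewrite (big_nat_widen 0 s t) // big_mkord big_mkcond /= in E.
rewrite sum_option ob_upd_at /= mulr0 add0r.
transitivity (g s - g 0); last by rewrite /g /Xseq /= C0 subr0.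
rewrite -E; apply: eq_bigr => u _.
rewrite ob_upd_at /door_weight upd_at !Xseq_upd -/(g u) -/(g u.+1) gstep.
by case: (u < s)%N; rewrite ?mulr1 ?mulr0.
Qed.

Lemma inner_all C (kk : 'I_d) o : C kk [::] = 0 ->
  \sum_v door_weight C pi (upd o kk v) kk = 1.
Proof.
move=> C0; have := inner_ob o C0 (leqnn t).
rewrite !sum_option ob_upd_at /= mulr0 add0r.
have -> : door_weight C pi (upd o kk None) kk = 1 - C kk (Xseq pi o kk t).
  by rewrite /door_weight upd_at Xseq_upd.
rewrite (eq_bigr (fun u => door_weight C pi (upd o kk (Some u)) kk)) => [->|u _].
  by rewrite subrK.
by rewrite ob_upd_at ltn_ord mulr1.
Qed.

Lemma Dpeel C (kk : 'I_d) s : C kk [::] = 0 -> (s <= t)%N ->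
  D C kk.+1 s = \sum_(o | inO kk o) W C kk o * (Aev kk s o)%:R * C kk (Xseq pi o kk s).
Proof.
move=> C0 hs; rewrite /D sum_peel; apply: eq_bigr => o _.
rewrite -(inner_ob o C0 hs) big_distrr /=; apply: eq_bigr => v _.
rewrite W_peel Aev_peel.
case: (Aev kk s o); case: (opened_before (upd o kk v) kk s) => /=; ring.
Qed.

Definition Stot C k := \sum_(o : outcome d t | inO k o) W C k o.

Lemma Stot_peel C (kk : 'I_d) : C kk [::] = 0 -> Stot C kk.+1 = Stot C kk.
Proof.
move=> C0; rewrite /Stot sum_peel; apply: eq_bigr => o _.
rewrite (eq_bigr (fun v => W C kk o * door_weight C pi (upd o kk v) kk)) => [|v _].
  by rewrite -big_distrr /= inner_all // mulr1.
by rewrite W_peel.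
Qed.

Definition o0 : outcome d t := [ffun => None].

Lemma sum_O0 (F : outcome d t -> R) : \sum_(o | inO 0 o) F o = F o0.
Proof.
apply: big_pred1 => o /=; apply/forallP/eqP => [h|->].
  apply/ffunP => j; rewrite ffunE; exact/eqP/(implyP (h j) (leq0n _)).
by move=> j; rewrite ffunE eqxx implybT.
Qed.

Lemma W0 C o : W C 0 o = 1.
Proof. by rewrite /W big1 // => i; rewrite ltn0. Qed.

Lemma Aev0 s o : Aev 0 s o.
Proof. by apply/forallP => j; rewrite ltn0. Qed.

Lemma D0 C s : D C 0 s = 1.
Proof. by rewrite /D sum_O0 W0 Aev0 mulr1. Qed.

Lemma Stot0 C : Stot C 0 = 1.
Proof. by rewrite /Stot sum_O0 W0. Qed.

Lemma Stot_d C : (forall i, C i [::] = 0) -> Stot C d = 1.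
Proof.
move=> C0.
suff: forall k, (k <= d)%N -> Stot C k = 1 by apply.
elim=> [|k IH] hk; first exact: Stot0.
have hk' : (k < d)%N by [].
have := @Stot_peel C (Ordinal hk') (C0 _); rewrite /= => ->; apply: IH; exact: ltnW.
Qed.

Lemma Aev_d o : Aev d t o = ~~ [exists i, o i == None].
Proof.
rewrite negb_exists; apply: eq_forallb => j; rewrite ltn_ord /= /opened_before.
by case: (o j) => [u|] //=; rewrite ltn_ord.
Qed.

Lemma P_not_done_D C : (forall i, C i [::] = 0) -> P_not_done C pi t = 1 - D C d t.
Proof.
move=> C0; rewrite -(Stot_d C0) /P_not_done /Stot /D big_mkcond -sumrB.
have inOd : forall o, inO d o.
  by move=> o; apply/forallP => j; rewrite leqNgt ltn_ord.
have SumE : forall F : outcome d t -> R, \sum_(o | inO d o) F o = \sum_o F o.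
  by move=> F; apply: eq_bigl => o; rewrite inOd.
rewrite !SumE.
apply: eq_bigr => o _.
have -> : W C d o = outcome_prob C pi o.
  by rewrite /W /outcome_prob; apply: eq_bigl => i; rewrite ltn_ord.
rewrite Aev_d; case: [exists i, o i == None] => /=; ring.
Qed.

Lemma valid_Xseq o (i : 'I_d) b : valid_input i (Xseq pi o i b).
Proof.
rewrite /valid_input /Xseq all_map; apply/allP => s _ /=.
by apply/fintype.subsetP => j; rewrite !inE => /andP[].
Qed.

Lemma dw_ge0 C o i : is_probability_config C -> monotone_config C ->
  0 <= door_weight C pi o i.
Proof.
move=> hp hm; rewrite /door_weight; case: (o i) => [u|].
  case: eqP => _ //; rewrite subr_ge0; apply: hm; first exact: valid_Xseq.
  by rewrite Xseq_S -{1}(cats0 (Xseq pi o i u)) subseq_cat2l sub0seq.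
rewrite subr_ge0; case: (hp i) => _ /(_ _ (valid_Xseq o i t)) /andP[_ //].
Qed.

Lemma W_ge0 C k o : is_probability_config C -> monotone_config C -> 0 <= W C k o.
Proof. by move=> hp hm; apply: prodr_ge0 => i _; apply: dw_ge0. Qed.

Lemma D_ge0 C k s : is_probability_config C -> monotone_config C -> 0 <= D C k s.
Proof. by move=> hp hm; apply: sumr_ge0 => o _; apply: mulr_ge0 (W_ge0 _ _ _ _) _. Qed.

Lemma P_not_done_ge0 C : is_probability_config C -> monotone_config C ->
  0 <= P_not_done C pi t.
Proof. by move=> hp hm; apply: sumr_ge0 => o _; apply: prodr_ge0 => i _; apply: dw_ge0. Qed.
End Main.

Definition gg (R : realType) (P : pred nat) (f : nat -> R) (s r : nat) : R :=
  if (r <= s)%N then f (count P (iota r (s - r))) else 0.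

Lemma abel (R : realType) (A : nat -> bool) (P : pred nat) (f : nat -> R) s :
  (forall r, A r -> A r.+1) ->
  (A s)%:R * f (count A [seq r <- iota 0 s | P r])
  = \sum_(0 <= r < s.+1) (A r)%:R * (gg P f s r - gg P f s r.+1).
Proof.
move=> hA.
have Amono : forall r r', (r <= r')%N -> A r -> A r'.
  move=> r r' hrr'; rewrite -(subnKC hrr'); elim: (r' - r)%N => [|n IH].
    by rewrite addn0.
  by rewrite addnS => /IH /hA.
case As: (A s).
  have [m Am mmin] := ex_minnP (ex_intro A s As).
  have hms : (m <= s)%N := mmin s As.
  have Aeq : forall r, A r = (m <= r)%N.
    by move=> r; apply/idP/idP => [/mmin //|h]; apply: Amono h Am.
  rewrite mul1r count_filter -{1}(subnKC hms) iotaD count_cat add0n.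
  rewrite (@eq_in_count _ _ pred0 (iota 0 m)); last first.
    by move=> r; rewrite mem_iota add0n => /andP[_ h] /=; rewrite Aeq leqNgt h.
  rewrite count_pred0 add0n.
  rewrite (@eq_in_count _ _ P (iota m (s - m))); last first.
    by move=> r; rewrite mem_iota => /andP[h _] /=; rewrite Aeq h.
  rewrite (@big_cat_nat _ _ _ m 0 s.+1) //=; last exact: leqW.
  rewrite big_nat_cond big1 ?add0r; last first.
    by move=> r /andP[/andP[_ h] _]; rewrite Aeq leqNgt h mul0r.
  rewrite (eq_big_nat _ _ (F2 := fun r => gg P f s r - gg P f s r.+1)); last first.
    by move=> r /andP[h _]; rewrite Aeq h mul1r.
  rewrite (@telescope_sumr_eq _ m s.+1 (fun r => - gg P f s r)) ?leqW //; last first.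
    by move=> k _; rewrite opprK addrC.
  by rewrite /gg ltnn hms opprK oppr0 add0r.
rewrite mul0r big_nat_cond big1 // => r /andP[/andP[_ hr] _].
case Ar: (A r); last by rewrite mul0r.
by rewrite (Amono r s hr Ar) in As.
Qed.

Section Main2.
Variables (R : realType) (d : nat) (pi : nat -> 'I_d) (t : nat).
Implicit Types (C : config R d) (o : outcome d t).

Definition phi C (i : 'I_d) n := C i (fullseq i n).

Lemma valid_full (i : 'I_d) n : valid_input i (fullseq i n).
Proof. by rewrite /valid_input /fullseq all_nseq /= subxx orbT. Qed.

Lemma phi_mono C (i : 'I_d) m n : monotone_config C -> (m <= n)%N -> phi C i m <= phi C i n.
Proof.
move=> hm mn; apply: hm; first exact: valid_full.
rewrite /fullseq -(subnKC mn) nseqD -{1}(cats0 (nseq m _)) subseq_cat2l sub0seq //.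
Qed.

Lemma phi_ge0 C (i : 'I_d) n : is_probability_config C -> 0 <= phi C i n.
Proof. by move=> hp; case: (hp i) => _ /(_ _ (valid_full i n)) /andP[]. Qed.

Lemma sim_phi C1 C2 (i : 'I_d) n : similar_config C1 C2 -> phi C1 i n = phi C2 i n.
Proof. by move=> h; have := h i n; rewrite /fund /phi => E; lra. Qed.

Lemma all2_full (i : 'I_d) (s : seq {set 'I_d}) : valid_input i s ->
  all2 (fun a b : {set 'I_d} => a \subset b) s (nseq (size s) (lower i)).
Proof. by elim: s => //= a s IH /andP[ha hs]; rewrite ha IH. Qed.

Lemma filter_eq_nseq (T : eqType) (s : seq T) x :
  [seq y <- s | y == x] = nseq (count (fun y => y == x) s) x.
Proof. by elim: s => //= a s IH; case: eqP => [->|] /=; rewrite IH. Qed.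

Lemma open_lower_full o (kk : 'I_d) r :
  (open_lower o kk r == lower kk) = Aev kk r o.
Proof.
apply/eqP/idP => [E|h].
  apply/forallP => j; apply/implyP => hj.
  have : j \in lower kk by rewrite inE.
  by rewrite -E inE => /andP[].
apply/setP => j; rewrite !inE; case hj: (j < kk)%N => //=.
exact: (implyP (forallP h j) hj).
Qed.

Lemma count_Xseq o (kk : 'I_d) s :
  count (fun X => X == lower kk) (Xseq pi o kk s)
  = count (fun r => Aev kk r o) [seq r <- iota 0 s | pi r == kk].
Proof. by rewrite /Xseq count_map; apply: eq_count => r /=; rewrite open_lower_full. Qed.

Lemma Aev_S (kk : nat) r o : Aev kk r o -> Aev kk r.+1 o.
Proof.
move/forallP => h; apply/forallP => j; apply/implyP => hj.
move: (implyP (h j) hj); rewrite /opened_before; case: (o j) => // u.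
exact: ltnW.
Qed.

Lemma D_abel C (kk : 'I_d) (f : nat -> R) s :
  \sum_(o : outcome d t | inO kk o) W pi C kk o * ((Aev kk s o)%:R *
      f (count (fun r => Aev kk r o) [seq r <- iota 0 s | pi r == kk]))
  = \sum_(0 <= r < s.+1) D pi t C kk r *
      (gg (fun r => pi r == kk) f s r - gg (fun r => pi r == kk) f s r.+1).
Proof.
rewrite (eq_bigr (fun o => W pi C kk o * \sum_(0 <= r < s.+1) (Aev kk r o)%:R *
   (gg (fun r => pi r == kk) f s r - gg (fun r => pi r == kk) f s r.+1))); last first.
  by move=> o _; rewrite (@abel R (fun r => Aev kk r o) (fun r => pi r == kk) f s) // => r; exact: Aev_S.
under eq_bigr do rewrite big_distrr.
rewrite exchange_big; apply: eq_bigr => r _.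
rewrite /D big_distrl; apply: eq_bigr => o _ /=; ring.
Qed.
End Main2.

Section Main3.
Variables (R : realType) (d : nat) (pi : nat -> 'I_d) (t : nat).
Implicit Types (C : config R d) (o : outcome d t).

Lemma prob0 C : is_probability_config C -> forall i, C i [::] = 0.
Proof. by move=> hp i; case: (hp i). Qed.

Lemma step_I (CC CI : config R d) : good_config CC -> good_config CI -> similar_config CC CI ->
  independent CI ->
  forall k, (k <= d)%N -> forall s, (s <= t)%N -> D pi t CC k s <= D pi t CI k s.
Proof.
case=> hpC hmC hcC _ [hpI hmI _ _] hsim hI.
elim=> [|k IH] hk s hs; first by rewrite !D0.
have hk' : (k < d)%N by [].
pose kk := Ordinal hk'.
have E1 := Dpeel pi (prob0 hpC kk) hs.
have E2 := Dpeel pi (prob0 hpI kk) hs.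
rewrite /= in E1 E2; rewrite E1 E2 {E1 E2}.
set n := count (fun r => pi r == kk) (iota 0 s).
have sz : forall o, size (Xseq pi o kk s) = n.
  by move=> o; rewrite size_map size_filter.
have eI : forall o, CI kk (Xseq pi o kk s) = phi CI kk n.
  by move=> o; rewrite hI; [rewrite sz | exact: valid_Xseq].
have lC : forall o, CC kk (Xseq pi o kk s) <= phi CC kk n.
  move=> o; apply: hcC; first exact: valid_full.
  by rewrite /fullseq -(sz o); apply: all2_full; exact: valid_Xseq.
have eqphi : phi CC kk n = phi CI kk n := sim_phi _ _ hsim.
apply: (@le_trans _ _ (phi CC kk n * D pi t CC kk s)).
  rewrite /D big_distrr; apply: ler_sum => o _ /=.
  rewrite [phi CC kk n * _]mulrC; apply: ler_wpM2l; last exact: lC.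
  by apply: mulr_ge0; [exact: W_ge0 | exact: ler0n].
rewrite (eq_bigr (fun o => W pi CI kk o * (Aev kk s o)%:R * phi CI kk n)) => [|o _]; last by rewrite eI.
rewrite -big_distrl /=.
have -> : \sum_(o : outcome d t | inO kk o) W pi CI kk o * (Aev kk s o)%:R = D pi t CI kk s by [].
rewrite mulrC eqphi; apply: ler_wpM2r; first exact: phi_ge0.
exact: IH (ltnW hk) s hs.
Qed.

Lemma step_X (CC CX : config R d) : good_config CC -> good_config CX -> similar_config CC CX ->
  cascading CX ->
  forall k, (k <= d)%N -> forall s, (s <= t)%N -> D pi t CX k s <= D pi t CC k s.
Proof.
case=> hpC hmC hcC _ [hpX hmX _ _] hsim hX.
elim=> [|k IH] hk s hs; first by rewrite !D0.
have hk' : (k < d)%N by [].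
pose kk := Ordinal hk'.
have E1 := Dpeel pi (prob0 hpX kk) hs.
have E2 := Dpeel pi (prob0 hpC kk) hs.
rewrite /= in E1 E2; rewrite E1 E2 {E1 E2}.
pose f := phi CX kk.
pose cnt := fun o : outcome d t => count (fun r => Aev kk r o) [seq r <- iota 0 s | pi r == kk].
have eX : forall o, CX kk (Xseq pi o kk s) = f (cnt o).
  by move=> o; rewrite hX; [rewrite count_Xseq | exact: valid_Xseq].
have lC : forall o, f (cnt o) <= CC kk (Xseq pi o kk s).
  move=> o; rewrite /f -(sim_phi _ _ hsim) /phi /cnt -count_Xseq.
  apply: hmC; first exact: valid_Xseq.
  by rewrite /fullseq -filter_eq_nseq; exact: filter_subseq.
rewrite (eq_bigr (fun o => W pi CX kk o * ((Aev kk s o)%:R * f (cnt o)))) => [|o _]; last by rewrite eX mulrA.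
rewrite /cnt (D_abel pi t CX kk f s).
set P := fun r => pi r == kk.
apply: (@le_trans _ _ (\sum_(0 <= r < s.+1) D pi t CC kk r * (gg P f s r - gg P f s r.+1))).
  apply: ler_sum_nat => r /andP[_ hr]; rewrite ltnS in hr; apply: ler_wpM2r.
    rewrite subr_ge0 /gg hr; case: (ltnP r s) => h.
      apply: phi_mono => //.
      rewrite -(subnSK h) /=; exact: leq_addl.
    exact: phi_ge0.
  exact: IH (ltnW hk) r (leq_trans hr hs).
rewrite -(D_abel pi t CC kk f s); apply: ler_sum => o _; rewrite mulrA; apply: ler_wpM2l; last exact: lC.
by apply: mulr_ge0; [exact: W_ge0 | exact: ler0n].
Qed.

Lemma PND_I (CC CI : config R d) : good_config CC -> good_config CI -> similar_config CC CI ->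
  independent CI -> P_not_done CI pi t <= P_not_done CC pi t.
Proof.
move=> gC gI hs hI; have := step_I gC gI hs hI (leqnn d) (leqnn t).
case: gC => hpC _ _ _; case: gI => hpI _ _ _.
rewrite !P_not_done_D; [lra | exact: prob0 | exact: prob0].
Qed.

Lemma PND_X (CC CX : config R d) : good_config CC -> good_config CX -> similar_config CC CX ->
  cascading CX -> P_not_done CC pi t <= P_not_done CX pi t.
Proof.
move=> gC gX hs hX; have := step_X gC gX hs hX (leqnn d) (leqnn t).
case: gC => hpC _ _ _; case: gX => hpX _ _ _.
rewrite !P_not_done_D; [lra | exact: prob0 | exact: prob0].
Qed.
End Main3.

Lemma ET_le (R : realType) (d : nat) (C1 C2 : config R d) pi :
  good_config C1 -> (forall t, P_not_done C1 pi t <= P_not_done C2 pi t) ->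
  (ET C1 pi <= ET C2 pi)%E.
Proof.
case=> hp hm _ _ h; rewrite /ET; apply: lee_nneseries => [i _ _|n _]; rewrite lee_fin //.
exact: P_not_done_ge0.
Qed.

Lemma Topt_le (R : realType) (d : nat) (C1 C2 : config R d) :
  (forall pi, (ET C1 pi <= ET C2 pi)%E) -> (Topt C1 <= Topt C2)%E.
Proof.
move=> h; rewrite /Topt; apply/ereal_infP => y [pi _ <-].
apply: le_trans (h pi); apply: ge_ereal_inf; exists (ET C1 pi) => //; by exists pi.
Qed.

Theorem mainTheorem1 (R : realType) (d : nat) (CC CX CI : config R d) :
  (2 <= d)%N ->
  good_config CC -> good_config CX -> good_config CI ->
  similar_config CC CX -> similar_config CC CI -> similar_config CX CI ->
  cascading CX -> independent CI ->
  (forall pi : nat -> 'I_d,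
     (ET CI pi <= ET CC pi)%E /\ (ET CC pi <= ET CX pi)%E) /\
  ((Topt CI <= Topt CC)%E /\ (Topt CC <= Topt CX)%E).
Proof.
move=> _ gC gX gI sCX sCI _ hX hI.
have H1 : forall pi, (ET CI pi <= ET CC pi)%E.
  move=> pi; apply: ET_le => // t; exact: PND_I.
have H2 : forall pi, (ET CC pi <= ET CX pi)%E.
  move=> pi; apply: ET_le => // t; exact: PND_X.
split; first by move=> pi; split.
by split; apply: Topt_le.
Qed.
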